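(* Consider the NWLA-CuSum stopping time $\overline{\tau}(b)$ with window size $w$ as defined in the context. For any change-point $\nu\ge1$ and any $b>0$, $$\operatorname{ess\,sup}\mathbb{E}_\nu\big[(\overline{\tau}(b)-\nu+1)^+\mid\mathcal{F}_{\nu-1}\big]\le\mathbb{E}_1[\overline{\tau}(b)].$$
   Context: Let $X_1,X_2,\dots\in\mathbb{R}^d$ be independent; for a deterministic change-point $\nu\ge1$, $X_1,\dots,X_{\nu-1}$ have known density $p_0$ and $X_\nu,X_{\nu+1},\dots$ have density $p_1$, w.r.t. a dominating measure $\mu$. $\mathbb{P}_\nu,\mathbb{E}_\nu$ denote probability/expectation with change-point $\nu$; $\mathcal{F}_0$ trivial, $\mathcal{F}_n=\sigma(X_1,\dots,X_n)$. A fixed density estimation procedure maps a finite collection of observations to a density w.r.t. $\mu$; for a positive integer $w$ and $n>w$, $\widehat{p}^w_n$ is its output on $X_{n-w},\dots,X_{n-1}$. Let $\widehat{Z}^w_n:=\log(\widehat{p}^w_n(X_n)/p_0(X_n))$ for $n>w$; $\overline{W}(1)=\dots=\overline{W}(w)=0$, $\overline{W}(n)=(\overline{W}(n-1))^++\widehat{Z}^w_n$ for $n>w$, and $\overline{\tau}(b):=\inf\{n>w:\overline{W}(n)\ge b\}$. *)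

(* Defs.v *)
From HB Require Import structures.
From mathcomp Require Import all_boot all_order all_algebra.
From mathcomp Require Import all_classical all_reals all_analysis.
From mathcomp Require Import measurable_realfun.
Set Implicit Arguments.
Unset Strict Implicit.
Unset Printing Implicit Defensive.
Import Order.TTheory GRing.Theory Num.Theory.
Import numFieldNormedType.Exports.
Local Open Scope classical_set_scope.
Local Open Scope ring_scope.

Section defs.
Context {R : realType} {dO dT : measure_display}
  {Omega : measurableType dO} {T : measurableType dT}.

Definition is_density (mu : {measure set T -> \bar R}) (f : T -> R) : Prop :=
  measurable_fun [set: T] f /\ (forall x, 0 <= f x) /\
  (\int[mu]_x (f x)%:E = 1)%E.

Definition mutually_independent (P : probability Omega R)
  (X : nat -> Omega -> T) : Prop :=
  forall (s : seq nat) (A : nat -> set T),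
    uniq s -> (forall i, i \in s -> (0 < i)%N) ->
    (forall i, measurable (A i)) ->
    P (\big[setI/setT]_(i <- s) (X i @^-1` A i)) =
    (\big[*%E/1%E]_(i <- s) P (X i @^-1` A i))%E.

Definition has_density (P : probability Omega R) (mu : {measure set T -> \bar R})
  (Y : Omega -> T) (f : T -> R) : Prop :=
  forall A, measurable A -> P (Y @^-1` A) = (\int[mu]_(x in A) (f x)%:E)%E.

Definition changepoint_model (P : probability Omega R)
  (mu : {measure set T -> \bar R}) (X : nat -> Omega -> T) (p0 p1 : T -> R)
  (nu : nat) : Prop :=
  mutually_independent P X /\
  (forall n, (0 < n)%N -> has_density P mu (X n) (if (n < nu)%N then p0 else p1)).

Definition natF (X : nat -> Omega -> T) (n : nat) : set (set Omega) :=
  <<s [set: Omega],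
      [set E | exists i (A : set T), [/\ (1 <= i <= n)%N, measurable A &
                                         E = X i @^-1` A]] >>.

Definition is_cond_exp (P : probability Omega R) (G : set (set Omega))
  (Y Z : Omega -> \bar R) : Prop :=
  (forall B : set (\bar R), measurable B -> G (Z @^-1` B)) /\
  (forall A, G A -> (\int[P]_(x in A) Z x = \int[P]_(x in A) Y x)%E).

Variables (w : nat) (X : nat -> Omega -> T) (est : w.-tuple T -> T -> R)
  (p0 : T -> R).

Definition window (n : nat) (om : Omega) : w.-tuple T :=
  [tuple X (n - w + i) om | i < w].

(** \hat Z^w_n = log( \hat p^w_n(X_n) / p0(X_n) ), in the extended reals
    (log 0 = -oo, log(a/0) = +oo for a > 0). *)
Definition Zhat (n : nat) (om : Omega) : \bar R :=
  (lne (est (window n om) (X n om))%:E - lne (p0 (X n om))%:E)%E.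

Fixpoint Wbar (n : nat) (om : Omega) : \bar R :=
  match n with
  | 0 => 0%E
  | m.+1 => if (m.+1 <= w)%N then 0%E
            else (maxe (Wbar m om) 0 + Zhat m.+1 om)%E
  end.

Definition tau_bar (b : R) (om : Omega) : \bar R :=
  ereal_inf [set (n%:R)%:E | n in [set n : nat | (w < n)%N /\ (b%:E <= Wbar n om)%E]].

End defs.

(* Main.v *)
Require Import Defs.
From HB Require Import structures.
From mathcomp Require Import all_boot all_order all_algebra.
From mathcomp Require Import all_classical all_reals all_analysis.
From mathcomp Require Import measurable_realfun ess_sup_inf.
From mathcomp Require Import zify lra.
Import Order.TTheory GRing.Theory Num.Theory.
Import numFieldNormedType.Exports.
Local Open Scope classical_set_scope.
Local Open Scope ring_scope.

Set Implicit Arguments.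
Unset Strict Implicit.
Unset Printing Implicit Defensive.


Section pathwise.
Context {R : realType} {dT : measure_display} {T : measurableType dT}.
Variables (w : nat) (est : w.-tuple T -> T -> R) (p0 : T -> R).

Lemma Wbar_local dA dB (A : measurableType dA) (B : measurableType dB)
  (Y : nat -> A -> T) (Y' : nat -> B -> T) (a : A) (b : B) n :
  (forall i, (1 <= i <= n)%N -> Y i a = Y' i b) ->
  Wbar Y est p0 n a = Wbar Y' est p0 n b.
Proof.
elim: n => [//|n IH] H /=.
case: ifP => // hw.
have -> : Wbar Y est p0 n a = Wbar Y' est p0 n b.
  by apply: IH => i /andP[h1 h2]; apply: H; rewrite h1 /= ltnW// ltnS.
congr (_ + _)%E.
rewrite /Zhat.
have hn : Y n.+1 a = Y' n.+1 b by apply: H; rewrite /= leqnn.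
have -> : window w Y n.+1 a = window w Y' n.+1 b.
  apply: eq_from_tnth => i; rewrite !tnth_mktuple; apply: H.
  move/negbT: hw; rewrite -ltnNge => hw.
  have := ltn_ord i; lia.
by rewrite hn.
Qed.

Lemma Zhat_shift dA (A : measurableType dA) (Y : nat -> A -> T) k n a :
  (w <= n)%N ->
  Zhat (fun i => Y (i + k)%N) est p0 n a = Zhat Y est p0 (n + k) a.
Proof.
move=> hn; rewrite /Zhat.
have -> : window w (fun i => Y (i + k)%N) n a = window w Y (n + k) a.
  apply: eq_from_tnth => i; rewrite !tnth_mktuple; congr (Y _ a); lia.
by [].
Qed.

Lemma Wbar_shift dA (A : measurableType dA) (Y : nat -> A -> T) k a n :
  (maxe (Wbar (fun i => Y (i + k)%N) est p0 n a) 0 <= maxe (Wbar Y est p0 (n + k) a) 0)%E /\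
  ((w < n)%N -> (Wbar (fun i => Y (i + k)%N) est p0 n a <= Wbar Y est p0 (n + k) a)%E).
Proof.
elim: n => [|n [IH1 IH2]].
  by split => //=; rewrite maxxx le_max lexx orbT.
have key : (w < n.+1)%N -> (Wbar (fun i => Y (i + k)%N) est p0 n.+1 a <= Wbar Y est p0 (n.+1 + k) a)%E.
  move=> hn; rewrite addSn /= ifF; last by apply/negbTE; rewrite -ltnNge.
  rewrite ifF; last by apply/negbTE; rewrite -ltnNge; lia.
  rewrite Zhat_shift; last by lia.
  by apply: leeD2r.
split => //.
have [hn|hn] := leqP n.+1 w.
  by rewrite /= hn maxxx le_max lexx orbT.
apply: le_max2 => //. 
exact: key.
Qed.

End pathwise.

Section tau_lemmas.
Context {R : realType} {dT : measure_display} {T : measurableType dT}.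
Variables (w : nat) (est : w.-tuple T -> T -> R) (p0 : T -> R).
Local Open Scope ereal_scope.

Definition Eset dA (A : measurableType dA) (Y : nat -> A -> T) (b : R) (k : nat) : set A :=
  [set a | forall n, (w < n)%N -> b%:E <= Wbar Y est p0 n a -> (k < n)%N].

Lemma tau_shift dA (A : measurableType dA) (Y : nat -> A -> T) k b a :
  tau_bar Y est p0 b a - k%:R%:E <= tau_bar (fun i => Y (i + k)%N) est p0 b a.
Proof.
apply: le_ereal_inf_tmp => _ [n [hn hb] <-].
rewrite leeBlDr// -EFinD -natrD.
apply: ge_ereal_inf; exists (n + k)%:R%:E => //.
exists (n + k)%N => //; split; first by lia.
apply: le_trans hb _; exact: (proj2 (Wbar_shift est p0 Y k a n)).
Qed.

Lemma tau_ge0 dA (A : measurableType dA) (Y : nat -> A -> T) b a :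
  0 <= tau_bar Y est p0 b a.
Proof.
by apply: le_ereal_inf_tmp => _ [n _ <-]; rewrite lee_fin.
Qed.

Lemma tau_series dA (A : measurableType dA) (Y : nat -> A -> T) b a :
  tau_bar Y est p0 b a = \sum_(0 <= k <oo) (\1_(Eset Y b k) a : R)%:E.
Proof.
pose S := [set n | (w < n)%N /\ b%:E <= Wbar Y est p0 n a].
have [[n0 Sn0]|nS] := pselect (exists n, S n).
  have exP : exists n, `[< S n >] by exists n0; apply/asboolP.
  case: (ex_minnP exP) => n /asboolP Sn minn.
  have taun : tau_bar Y est p0 b a = n%:R%:E.
    apply/eqP; rewrite eq_le; apply/andP; split.
      by apply: ge_ereal_inf; exists n%:R%:E => //; exists n.
    apply: le_ereal_inf_tmp => _ [m Sm <-]; rewrite lee_fin ler_nat.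
    by apply: minn; apply/asboolP.
  have EE k : ((\1_(Eset Y b k) a : R))%:E = (if (k < n)%N then 1 else 0).
    rewrite indicE; case: ifPn => kn.
      rewrite mem_set //= => m hm hb.
      apply: leq_trans kn _; apply: minn; apply/asboolP; by split.
    rewrite memNset //= => /(_ n (proj1 Sn) (proj2 Sn)); by rewrite (negbTE kn).
  rewrite taun (nneseries_split 0 n); last by move=> k _; rewrite EE; case: ifP.
  rewrite add0n eseries0; last by move=> i hi _; rewrite EE ifF//; apply/negbTE; rewrite -leqNgt.
  rewrite adde0 big_nat_cond (eq_bigr (fun _ => 1%:E)); last first.
    by move=> i /andP[/andP[_ hi] _]; rewrite EE hi.
  rewrite -big_nat_cond sumEFin; congr (_%:E).
  rewrite big_const_nat subn0; elim: (n) => //= j IHj; by rewrite -IHj -natr1 addrC.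
have EE k : ((\1_(Eset Y b k) a : R))%:E = 1.
  rewrite indicE mem_set //= => m hm hb; exfalso; apply: nS; exists m; by split.
have -> : tau_bar Y est p0 b a = +oo.
  rewrite /tau_bar (_ : [set _ | _ in _] = set0) ?ereal_inf0//.
  by apply/seteqP; split => // x [m Sm _]; apply: nS; exists m.
apply/eqP; rewrite eq_le leey /=.
have H N : N%:R%:E <= \sum_(0 <= k <oo) (\1_(Eset Y b k) a : R)%:E.
  apply: le_trans (nneseries_lim_ge N _); last by move=> k _ _; rewrite EE.
  rewrite big_nat_cond (eq_bigr (fun _ => 1%:E)); last by move=> i _; rewrite EE.
  rewrite -big_nat_cond sumEFin lee_fin big_const_nat subn0 iter_addr addr0.
  by [].
rewrite andbT; move: H; case: (\sum_(0 <= k <oo) _) => [r H| // |H]; last by have := H 0%N.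
have := H (Num.truncn r).+1; rewrite lee_fin => /(lt_le_trans (truncnS_gt r)).
by rewrite ltxx.
Qed.

End tau_lemmas.

Lemma Y_le_tau' {R : realType} {dT : measure_display} {T : measurableType dT}
  (w : nat) (est : w.-tuple T -> T -> R) (p0 : T -> R)
  dA (A : measurableType dA) (Y : nat -> A -> T) nu b a : (1 <= nu)%N ->
  (maxe (tau_bar Y est p0 b a - (nu%:R)%:E + 1) 0 <=
   tau_bar (fun i => Y (i + nu.-1)%N) est p0 b a)%E.
Proof.
move=> hnu; rewrite ge_max tau_ge0 andbT.
apply: le_trans (tau_shift est p0 Y nu.-1 b a).
case: (tau_bar Y est p0 b a) => [r| |] //=.
rewrite -EFinD -EFinB lee_fin.
have -> : nu%:R = (nu.-1)%:R + 1 :> R by rewrite natr1 prednK.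
by rewrite opprD addrA subrK.
Qed.

Section meas.
Context {R : realType} {dT : measure_display} {T : measurableType dT}.
Variables (w : nat) (est : w.-tuple T -> T -> R) (p0 : T -> R).
Hypothesis mp0 : measurable_fun setT p0.
Hypothesis mest : measurable_fun [set: w.-tuple T * T] (fun xy => est xy.1 xy.2).

Lemma measurable_lneE dA (A : measurableType dA) (f : A -> R) :
  measurable_fun setT f -> measurable_fun setT (fun a => lne (f a)%:E).
Proof.
move=> mf.
have -> : (fun a => lne (f a)%:E) = fun a => if (f a <= 0)%R then -oo%E else (ln (f a))%:E.
  by apply: funext => a.
apply: measurable_fun_ifT.
- by apply: measurable_fun_ler => //; exact: measurable_cst.
- exact: measurable_cst.
- by apply/measurable_EFinP; apply: measurableT_comp => //; exact: measurable_ln.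
Qed.

Lemma measurable_window dA (A : measurableType dA) (Y : nat -> A -> T) n :
  (forall i, measurable_fun setT (Y i)) -> measurable_fun setT (window w Y n).
Proof.
move=> mY; apply/measurable_fun_tnthP => i.
rewrite (_ : _ \o _ = Y (n - w + i)%N); [exact: mY | by apply: funext => a /=; rewrite tnth_mktuple].
Qed.

Lemma measurable_Zhat dA (A : measurableType dA) (Y : nat -> A -> T) n :
  (forall i, measurable_fun setT (Y i)) -> measurable_fun setT (Zhat Y est p0 n).
Proof.
move=> mY; apply: emeasurable_funB.
- apply: (measurable_lneE (f := fun a => est (window w Y n a) (Y n a))).
  apply: (measurableT_comp (f := fun xy => est xy.1 xy.2)
                           (g := fun a => (window w Y n a, Y n a))) => //.
  by apply: measurable_fun_pair => //; exact: measurable_window.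
- apply: (measurable_lneE (f := fun a => p0 (Y n a))).
  exact: measurableT_comp.
Qed.

Lemma measurable_Wbar dA (A : measurableType dA) (Y : nat -> A -> T) n :
  (forall i, measurable_fun setT (Y i)) -> measurable_fun setT (Wbar Y est p0 n).
Proof.
move=> mY; elim: n => [|n IH]; first exact: measurable_cst.
have [h|h] := leqP n.+1 w.
  have -> : Wbar Y est p0 n.+1 = fun _ => 0%E by apply: funext => a /=; rewrite h.
  exact: measurable_cst.
have -> : Wbar Y est p0 n.+1 = fun a => (maxe (Wbar Y est p0 n a) 0 + Zhat Y est p0 n.+1 a)%E.
  by apply: funext => a /=; rewrite leqNgt h.
apply: emeasurable_funD; last exact: measurable_Zhat.
by apply: measurable_maxe => //; exact: measurable_cst.
Qed.

Lemma measurable_Eset dA (A : measurableType dA) (Y : nat -> A -> T) b k :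
  (forall i, measurable_fun setT (Y i)) -> measurable (Eset est p0 Y b k).
Proof.
move=> mY.
have -> : Eset est p0 Y b k =
    \bigcap_n (if ((n <= k) && (w < n))%N then (Wbar Y est p0 n @^-1` `]-oo, b%:E[) else setT).
  apply/seteqP; split.
    move=> a Ea n _; case: ifP => // /andP[nk wn] /=; rewrite in_itv /= ltNge; apply/negP => hb.
    by have := Ea n wn hb; rewrite ltnNge nk.
  move=> a Ha n wn hb; rewrite ltnNge; apply/negP => nk.
  by have := Ha n I; rewrite nk wn /= in_itv /= ltNge hb.
apply: bigcapT_measurable => n; case: ifP => _ //.
by rewrite -[X in measurable X]setTI; apply: measurable_Wbar => //; exact: emeasurable_itv.
Qed.

End meas.
Local Open Scope ereal_scope.

Lemma bigsetI_memP {T : Type} {I : eqType} (s : seq I) (F : I -> set T) x :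
  (\big[setI/setT]_(i <- s) F i) x <-> (forall i, i \in s -> F i x).
Proof.
elim: s => [|a s IH]; first by rewrite big_nil; split.
rewrite big_cons; split.
  by move=> [Fa /IH Hs] i; rewrite in_cons => /orP[/eqP ->|/Hs].
move=> H; split; first by apply: H; rewrite in_cons eqxx.
by apply/IH => i hi; apply: H; rewrite in_cons hi orbT.
Qed.

Section boxes.
Context {dT : measure_display} {T : measurableType dT}.

Definition box m (B : nat -> set T) : set (m.-tuple T) :=
  [set t | forall i : 'I_m, B i (tnth t i)].
Arguments box : clear implicits.

Definition boxes m : set (set (m.-tuple T)) :=
  [set S | exists B : nat -> set T, (forall i, measurable (B i)) /\ S = box m B].
Arguments boxes : clear implicits.

Lemma boxesT m : boxes m setT.
Proof. by exists (fun _ => setT); split => //; apply/seteqP; split. Qed.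

Lemma boxesI m : setI_closed (boxes m).
Proof.
move=> _ _ [B [mB ->]] [B' [mB' ->]]; exists (fun i => B i `&` B' i); split.
  by move=> i; apply: measurableI.
apply/seteqP; split; first by move=> t [h1 h2] i; split.
by move=> t h; split => i; have [] := h i.
Qed.

Lemma box_measurable m B : (forall i, measurable (B i)) -> measurable (box m B).
Proof.
move=> mB.
have -> : box m B = \big[setI/setT]_(i <- enum 'I_m) ((fun t : m.-tuple T => tnth t i) @^-1` B i).
  apply/seteqP; split.
    by move=> t h; apply/bigsetI_memP => i _; apply: h.
  move=> t /bigsetI_memP h i; apply: h.
  by rewrite mem_enum.
apply: bigsetI_measurable => i _.
by rewrite -[X in measurable X]setTI; apply: measurable_tnth.
Qed.

Lemma bigsetU_memP {U : Type} {I : eqType} (s : seq I) (F : I -> set U) x :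
  (\big[setU/set0]_(i <- s) F i) x <-> (exists i, i \in s /\ F i x).
Proof.
elim: s => [|a s IH]; first by rewrite big_nil; split; [move=> [] | case=> i []].
rewrite big_cons; split.
  case=> [Fa|/IH [i [hi Fi]]]; first by exists a; rewrite in_cons eqxx.
  by exists i; rewrite in_cons hi orbT.
move=> [i []]; rewrite in_cons => /orP[/eqP -> Fa|hi Fi]; first by left.
by right; apply/IH; exists i.
Qed.

Lemma measurable_boxes m : @measurable _ (m.-tuple T) = <<s boxes m >>.
Proof.
apply/seteqP; split.
  apply: smallest_sub; first exact: smallest_sigma_algebra.
  move=> S /bigsetU_memP [i [_ [A mA <-]]].
  apply: sub_sigma_algebra; exists (fun j => if j == nat_of_ord i then A else setT); split.
    by move=> j; case: ifP.
  apply/seteqP; split.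
    by move=> t [_ /= h] j; case: ifP => // /eqP /val_inj ->.
  by move=> t /= /(_ i); rewrite eqxx.
apply: smallest_sub; first exact: sigma_algebra_measurable.
by move=> _ [B [mB ->]]; apply: box_measurable.
Qed.

End boxes.

Arguments box {dT T} m B _.
Arguments boxes {dT T} m _.
Lemma pushforward_eq {R : realType} {d1 d2 : measure_display} {T1 : measurableType d1} {T2 : measurableType d2}
  (P Q : probability T1 R) (f g : T1 -> T2) (mf : measurable_fun setT f) (mg : measurable_fun setT g)
  (G : set (set T2)) (mG : measurable = <<s G >>) (setIG : setI_closed G) (GT : G setT) :
  (forall C, G C -> P (f @^-1` C) = Q (g @^-1` C)) ->
  forall C, measurable C -> P (f @^-1` C) = Q (g @^-1` C).
Proof.
move=> h C mC.
have := (@measure_unique _ R T2 G (fun _ => setT) mG setIG (fun=> GT) _ (pushforward P f) (pushforward Q g)).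
have cov : \bigcup_(k in [set: nat]) [set: T2] = [set: T2].
  by apply/seteqP; split => // x _; exists 0%N.
move=> /(_ cov mf mg) H; apply: H => //.
by move=> k; change (P (f @^-1` setT) < +oo); rewrite preimage_setT probability_setT ltry.
Qed.

Lemma meas_unique_fin {R : realType} {d2 : measure_display} {T2 : measurableType d2}
  (G : set (set T2)) (mG : measurable = <<s G >>) (setIG : setI_closed G) (GT : G setT)
  (m1 m2 : {measure set T2 -> \bar R}) : m1 setT < +oo ->
  (forall C, G C -> m1 C = m2 C) -> forall C, measurable C -> m1 C = m2 C.
Proof.
move=> fin h C mC.
have cov : \bigcup_(k in [set: nat]) [set: T2] = [set: T2].
  by apply/seteqP; split => // x _; exists 0%N.
exact: (@measure_unique _ R T2 G (fun _ => setT) mG setIG (fun=> GT) cov m1 m2 h).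
Qed.

Lemma gmeas_unique {R : realType} {d2 : measure_display} {T2 : measurableType d2}
  (G : set (set T2)) (Gm : G `<=` measurable) (setIG : setI_closed G) (GT : G setT)
  (m1 m2 : {measure set T2 -> \bar R}) : m1 setT < +oo ->
  (forall C, G C -> m1 C = m2 C) -> forall C, <<s G >> C -> m1 C = m2 C.
Proof.
move=> fin h C mC.
have cov : \bigcup_(k in [set: nat]) [set: T2] = [set: T2].
  by apply/seteqP; split => // x _; exists 0%N.
exact: (@g_sigma_algebra_measure_unique _ R T2 G Gm (fun _ => setT) (fun=> GT) cov m1 m2 setIG h (fun=> fin)).
Qed.

Section prob.
Context {R : realType} {dO dT : measure_display} {Omega : measurableType dO}
  {T : measurableType dT}.
Variables (mu : {measure set T -> \bar R}) (p0 p1 : T -> R)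
  (P : nat -> probability Omega R) (X : nat -> Omega -> T).
Hypothesis hX : forall n, measurable_fun setT (X n).
Hypothesis hmodel : forall nu, (1 <= nu)%N -> changepoint_model (P nu) mu X p0 p1 nu.

Definition vec j m : Omega -> m.-tuple T := fun om => [tuple X (j + i)%N om | i < m].

Lemma measurable_vec j m : measurable_fun setT (vec j m).
Proof.
apply/measurable_fun_tnthP => i.
rewrite (_ : _ \o _ = X (j + i)%N); [exact: hX | by apply: funext => a /=; rewrite tnth_mktuple].
Qed.

Lemma vec_box j m B : vec j m @^-1` box m B =
  \big[setI/setT]_(i <- iota j m) (X i @^-1` B (i - j)%N).
Proof.
apply/seteqP; split.
  move=> om /= h; apply/bigsetI_memP => i; rewrite mem_iota => /andP[h1 h2].
  have hi : (i - j < m)%N by lia.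
  have := h (Ordinal hi); rewrite tnth_mktuple /=.
  by have -> : (j + (i - j) = i)%N by lia.
move=> om /bigsetI_memP h i /=; rewrite tnth_mktuple.
have := h (j + i)%N; rewrite mem_iota.
have -> : (j + i - j = i)%N by lia.
by have := ltn_ord i; move=> hi; apply; apply/andP; split; lia.
Qed.

Lemma indep_big nu s A : (1 <= nu)%N -> uniq s -> (forall i, i \in s -> (0 < i)%N) ->
  (forall i, measurable (A i)) ->
  P nu (\big[setI/setT]_(i <- s) (X i @^-1` A i)) =
  \prod_(i <- s) P nu (X i @^-1` A i).
Proof. by move=> hnu us ps mA; have [hi _] := hmodel hnu; apply: hi. Qed.

Lemma prob_X nu i A : (1 <= nu)%N -> (0 < i)%N -> measurable A ->
  P nu (X i @^-1` A) = \int[mu]_(x in A) ((if (i < nu)%N then p0 else p1) x)%:E.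
Proof. by move=> hnu hi mA; have [_ hd] := hmodel hnu; apply: hd. Qed.

Lemma law_box nu m B : (1 <= nu)%N -> (forall i, measurable (B i)) ->
  P nu (vec nu m @^-1` box m B) = \prod_(i < m) \int[mu]_(x in B i) (p1 x)%:E.
Proof.
move=> hnu mB.
have u := iota_uniq nu m.
have pos : forall i, i \in iota nu m -> (0 < i)%N by move=> i; rewrite mem_iota; lia.
rewrite vec_box indep_big //.
rewrite -{1}(addn0 nu) iotaDl big_map.
have -> : iota 0 m = index_iota 0 m by rewrite /index_iota subn0.
rewrite big_mkord.
apply: eq_bigr => i _.
rewrite prob_X //; last by lia.
rewrite ifF; last by apply/negbTE; rewrite -leqNgt; lia.
by have -> : (nu + i - nu = i)%N by lia.
Qed.

Lemma law_eq nu m C : (1 <= nu)%N -> measurable C ->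
  P nu (vec nu m @^-1` C) = P 1%N (vec 1 m @^-1` C).
Proof.
move=> hnu; apply: (pushforward_eq (@measurable_vec nu m) (@measurable_vec 1 m) (measurable_boxes m) (@boxesI _ _ m) (boxesT m)).
by move=> _ [B [mB ->]]; rewrite !law_box.
Qed.

Definition cyl n (A0 : nat -> set T) : set Omega :=
  \big[setI/setT]_(i <- iota 1 n) (X i @^-1` A0 i).

Definition cyls n : set (set Omega) :=
  [set S | exists A0 : nat -> set T, (forall i, measurable (A0 i)) /\ S = cyl n A0].

Lemma cyl_measurable n A0 : (forall i, measurable (A0 i)) -> measurable (cyl n A0).
Proof.
move=> mA; apply: bigsetI_measurable => i _.
by rewrite -[X in measurable X]setTI; apply: hX.
Qed.

Lemma cylsT n : cyls n setT.
Proof.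
exists (fun _ => setT); split => //.
by apply/seteqP; split => // om _; apply/bigsetI_memP.
Qed.

Lemma cylsI n : setI_closed (cyls n).
Proof.
move=> _ _ [A [mA ->]] [B [mB ->]]; exists (fun i => A i `&` B i); split.
  by move=> i; apply: measurableI.
apply/seteqP; split.
  move=> om [/bigsetI_memP h1 /bigsetI_memP h2]; apply/bigsetI_memP => i hi.
  by split; [apply: h1 | apply: h2].
move=> om /bigsetI_memP h; split; apply/bigsetI_memP => i hi; by have [] := h i hi.
Qed.

Lemma cyls_meas n : <<s cyls n >> `<=` measurable.
Proof.
apply: smallest_sub; first exact: sigma_algebra_measurable.
by move=> _ [A [mA ->]]; apply: cyl_measurable.
Qed.

Lemma natF_cyls n : natF X n `<=` <<s cyls n >>.
Proof.
apply: smallest_sub; first exact: smallest_sigma_algebra.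
move=> _ [i [A [/andP[h1 h2] mA ->]]].
apply: sub_sigma_algebra; exists (fun j => if j == i then A else setT); split.
  by move=> j; case: ifP.
apply/seteqP; split.
  move=> om /= hA; apply/bigsetI_memP => j _ /=; by case: ifP => // /eqP ->.
move=> om /bigsetI_memP /(_ i); rewrite eqxx /=; apply; rewrite mem_iota; lia.
Qed.

Lemma natF_meas n : natF X n `<=` measurable.
Proof. by move=> A /natF_cyls /cyls_meas. Qed.

Lemma indep_split nu s1 s2 A : (1 <= nu)%N -> uniq (s1 ++ s2) ->
  (forall i, i \in s1 ++ s2 -> (0 < i)%N) -> (forall i, measurable (A i)) ->
  P nu (\big[setI/setT]_(i <- s1) (X i @^-1` A i) `&` \big[setI/setT]_(i <- s2) (X i @^-1` A i)) =
  P nu (\big[setI/setT]_(i <- s1) (X i @^-1` A i)) * P nu (\big[setI/setT]_(i <- s2) (X i @^-1` A i)).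
Proof.
move=> hnu u pos mA.
rewrite -big_cat (indep_big hnu u pos mA) big_cat /=.
move: u; rewrite cat_uniq => /and3P[u1 _ u2].
rewrite -!indep_big // => i hi; apply: pos; rewrite mem_cat hi ?orbT //.
Qed.

Lemma cyl_box nu m A0 B : (1 <= nu)%N -> (forall i, measurable (A0 i)) ->
  (forall i, measurable (B i)) ->
  P nu (cyl nu.-1 A0 `&` vec nu m @^-1` box m B) =
  P nu (cyl nu.-1 A0) * P nu (vec nu m @^-1` box m B).
Proof.
move=> hnu mA0 mB.
pose A i := if (i < nu)%N then A0 i else B (i - nu)%N.
have mA i : measurable (A i) by rewrite /A; case: ifP.
have e1 : cyl nu.-1 A0 = \big[setI/setT]_(i <- iota 1 nu.-1) (X i @^-1` A i).
  apply: eq_big_seq => i; rewrite mem_iota => hi; rewrite /A ifT //; lia.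
have e2 : vec nu m @^-1` box m B = \big[setI/setT]_(i <- iota nu m) (X i @^-1` A i).
  rewrite vec_box; apply: eq_big_seq => i; rewrite mem_iota => hi; rewrite /A ifF //.
  by apply/negbTE; rewrite -leqNgt; lia.
have ecat : iota 1 nu.-1 ++ iota nu m = iota 1 (nu.-1 + m).
  by rewrite iotaD add1n prednK.
rewrite e1 e2 indep_split // ecat ?iota_uniq // => i; rewrite mem_iota; lia.
Qed.

Lemma indep_cyl_C nu m A0 C : (1 <= nu)%N -> (forall i, measurable (A0 i)) -> measurable C ->
  P nu (cyl nu.-1 A0 `&` vec nu m @^-1` C) =
  P nu (cyl nu.-1 A0) * P nu (vec nu m @^-1` C).
Proof.
move=> hnu mA0 mC.
have mc : measurable (cyl nu.-1 A0) by apply: cyl_measurable.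
pose r : {nonneg R} := NngNum (fine_ge0 (measure_ge0 (P nu) (cyl nu.-1 A0))).
have := @meas_unique_fin R _ _ _ (measurable_boxes m) (@boxesI _ _ m) (boxesT m)
  (pushforward (mrestr (P nu) mc) (vec nu m)) (mscale r (pushforward (P nu) (vec nu m))).
move=> /(_ (@measurable_vec nu m) (@measurable_vec nu m)) H.
have mV : measurable (vec nu m @^-1` C).
  by rewrite -[X in measurable X]setTI; apply: measurable_vec.
have fc : P nu (cyl nu.-1 A0) \is a fin_num by apply: fin_num_measure.
have fin : P nu (vec nu m @^-1` setT `&` cyl nu.-1 A0) < +oo.
  apply: (le_lt_trans (probability_le1 _ _)); last exact: ltry.
  by apply: measurableI => //; rewrite preimage_setT.
have hb : forall C0 : set (m.-tuple T), boxes m C0 -> P nu (vec nu m @^-1` C0 `&` cyl nu.-1 A0) =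
          (fine (P nu (cyl nu.-1 A0)))%:E * P nu (vec nu m @^-1` C0).
  move=> _ [B [mB ->]].
  by rewrite fineK // setIC cyl_box.
have HC := H fin hb C mC.
have {}HC : P nu (vec nu m @^-1` C `&` cyl nu.-1 A0) =
          (fine (P nu (cyl nu.-1 A0)))%:E * P nu (vec nu m @^-1` C) := HC.
by rewrite -(fineK fc) -HC setIC.
Qed.

Lemma indep_natF nu m A C : (1 <= nu)%N -> natF X nu.-1 A -> measurable C ->
  P nu (A `&` vec nu m @^-1` C) = P nu A * P nu (vec nu m @^-1` C).
Proof.
move=> hnu hA mC.
have mV : measurable (vec nu m @^-1` C).
  by rewrite -[X in measurable X]setTI; apply: measurable_vec.
have fV : P nu (vec nu m @^-1` C) \is a fin_num by apply: fin_num_measure.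
pose r : {nonneg R} := NngNum (fine_ge0 (measure_ge0 (P nu) (vec nu m @^-1` C))).
have Gm : cyls nu.-1 `<=` measurable by move=> _ [A0 [mA0 ->]]; apply: cyl_measurable.
have H := @gmeas_unique R _ _ _ Gm (@cylsI nu.-1) (cylsT nu.-1) (mrestr (P nu) mV) (mscale r (P nu)).
have fin : P nu (setT `&` vec nu m @^-1` C) < +oo.
  apply: (le_lt_trans (probability_le1 _ _)); last exact: ltry.
  by apply: measurableI.
have hb : forall A1 : set Omega, cyls nu.-1 A1 -> P nu (A1 `&` vec nu m @^-1` C) =
          (fine (P nu (vec nu m @^-1` C)))%:E * P nu A1.
  move=> _ [A0 [mA0 ->]].
  by rewrite fineK // muleC indep_cyl_C.
have HC := H fin hb A (natF_cyls hA).
have {}HC : P nu (A `&` vec nu m @^-1` C) =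
          (fine (P nu (vec nu m @^-1` C)))%:E * P nu A := HC.
by rewrite HC fineK // muleC.
Qed.

Variables (w : nat) (est : w.-tuple T -> T -> R) (t0 : T).
Hypothesis mp0 : measurable_fun setT p0.
Hypothesis mest : measurable_fun [set: w.-tuple T * T] (fun xy => est xy.1 xy.2).

Definition Ycoord m (i : nat) (t : m.-tuple T) : T := nth t0 t i.-1.

Lemma measurable_Ycoord m i : measurable_fun setT (@Ycoord m i).
Proof.
have [h|h] := ltnP i.-1 m.
  rewrite (_ : Ycoord i = fun t => tnth t (Ordinal h)); first exact: measurable_tnth.
  by apply: funext => t; rewrite /Ycoord (tnth_nth t0).
rewrite (_ : Ycoord i = fun _ => t0); first exact: measurable_cst.
by apply: funext => t; rewrite /Ycoord nth_default // size_tuple.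
Qed.

Lemma Eset_local dA dB (A : measurableType dA) (B : measurableType dB)
  (Y : nat -> A -> T) (Y' : nat -> B -> T) (a : A) (a' : B) b k :
  (forall i, (1 <= i <= k)%N -> Y i a = Y' i a') ->
  Eset est p0 Y b k a <-> Eset est p0 Y' b k a'.
Proof.
move=> h.
have Wl n : (n <= k)%N -> Wbar Y est p0 n a = Wbar Y' est p0 n a'.
  move=> nk; apply: Wbar_local => i /andP[h1 h2]; apply: h; lia.
split => H n wn hb; (have [nk|//] := leqP n k).
  by have := H n wn; rewrite Wl // => /(_ hb); rewrite ltnNge nk.
by have := H n wn; rewrite -Wl // => /(_ hb); rewrite ltnNge nk.
Qed.

Lemma Eset_vec j b k : (1 <= j)%N ->
  Eset est p0 (fun i => X (i + j.-1)%N) b k = vec j k @^-1` Eset est p0 (@Ycoord k) b k.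
Proof.
move=> hj.
have key om : Eset est p0 (fun i => X (i + j.-1)%N) b k om <->
    Eset est p0 (@Ycoord k) b k (vec j k om).
  apply: Eset_local => i /andP[h1 h2]; have hi : (i.-1 < k)%N by lia.
  rewrite /Ycoord -(tnth_nth t0 _ (Ordinal hi)) tnth_mktuple /=; congr (X _ om); lia.
by apply/seteqP; split => om; [exact: (key om).1 | exact: (key om).2].
Qed.

Lemma int_tau q j D b : (1 <= j)%N -> measurable D ->
  \int[P q]_(om in D) tau_bar (fun i => X (i + j.-1)%N) est p0 b om =
  \sum_(0 <= k <oo) P q (vec j k @^-1` Eset est p0 (@Ycoord k) b k `&` D).
Proof.
move=> hj mD.
have mY : forall i, measurable_fun setT (fun om => X (i + j.-1)%N om) by move=> i; apply: hX.
under eq_integral do rewrite tau_series.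
rewrite integral_nneseries //; last first.
  by move=> k; apply/measurable_EFinP; apply: measurable_indic; apply: measurable_Eset.
apply: eq_eseriesr => k _.
by rewrite integral_indic //; [rewrite Eset_vec | apply: measurable_Eset].
Qed.

Lemma measurable_tau dA (A : measurableType dA) (Y : nat -> A -> T) b :
  (forall i, measurable_fun setT (Y i)) -> measurable_fun setT (tau_bar Y est p0 b).
Proof.
move=> mY.
rewrite (_ : tau_bar Y est p0 b = fun a => \sum_(0 <= k <oo) (\1_(Eset est p0 Y b k) a : R)%:E); last first.
  by apply: funext => a; rewrite tau_series.
apply: (@ge0_emeasurable_sum _ _ _ _ _ predT) => //.
by move=> k _; apply/measurable_EFinP; apply: measurable_indic; apply: measurable_Eset.
Qed.

Lemma int_tau_natF nu A b : (1 <= nu)%N -> natF X nu.-1 A ->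
  \int[P nu]_(om in A) tau_bar (fun i => X (i + nu.-1)%N) est p0 b om =
  P nu A * \int[P nu]_om tau_bar (fun i => X (i + nu.-1)%N) est p0 b om.
Proof.
move=> hnu hA.
have mA := natF_meas hA.
have fA : P nu A \is a fin_num by apply: fin_num_measure.
rewrite !int_tau // -(fineK fA) -nneseriesZl; last by move=> i _; apply: measure_ge0.
apply: eq_eseriesr => k _.
rewrite setIT setIC (fineK fA) indep_natF //.
by apply: measurable_Eset => // i; apply: measurable_Ycoord.
Qed.

Lemma int_tau_law nu b : (1 <= nu)%N ->
  \int[P nu]_om tau_bar (fun i => X (i + nu.-1)%N) est p0 b om =
  \int[P 1%N]_om tau_bar X est p0 b om.
Proof.
move=> hnu.
have eX : (fun i => X (i + (1%N).-1)%N) = X by apply: funext => i; rewrite addn0.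
rewrite -[in RHS]eX !int_tau //.
apply: eq_eseriesr => k _; rewrite !setIT.
rewrite law_eq //.
by apply: measurable_Eset => // i; apply: measurable_Ycoord.
Qed.

Theorem main_gen nu b (Z : Omega -> \bar R) : (1 <= nu)%N ->
  is_cond_exp (P nu) (natF X nu.-1)
      (fun om => maxe (tau_bar X est p0 b om - (nu%:R)%:E + 1)%E 0%E) Z ->
  ess_sup (P nu) Z <= \int[P 1%N]_om tau_bar X est p0 b om.
Proof.
move=> hnu [hZm hZi].
set c := \int[P 1%N]_om tau_bar X est p0 b om.
have c0 : 0 <= c by apply: integral_ge0 => om _; apply: tau_ge0.
move: c0; case Ec : c => [r| |] //; last by move=> _; rewrite leey.
rewrite lee_fin => r0.
set X' := fun i => X (i + nu.-1)%N.
have mX' : forall i, measurable_fun setT (X' i) by move=> i; apply: hX.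
have mZ : measurable_fun setT Z.
  by move=> _ B mB; rewrite setTI; apply: natF_meas; apply: hZm.
have mYf : measurable_fun setT (fun om => maxe (tau_bar X est p0 b om - (nu%:R)%:E + 1)%E 0%E).
  apply: measurable_maxe; last exact: measurable_cst.
  apply: emeasurable_funD; last exact: measurable_cst.
  apply: emeasurable_funB; last exact: measurable_cst.
  exact: measurable_tau.
have key A : natF X nu.-1 A -> \int[P nu]_(om in A) Z om <= P nu A * r%:E.
  move=> hA; have mA := natF_meas hA.
  rewrite hZi //.
  apply: (le_trans (y := \int[P nu]_(om in A) tau_bar X' est p0 b om)).
    apply: ge0_le_integral => //.
    - by move=> om _; rewrite le_max lexx orbT.
    - exact: measurable_funS mYf.
    - exact: measurable_funS (measurable_tau _ mX').
    - by move=> om _; apply: Y_le_tau'.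
  by rewrite int_tau_natF // int_tau_law // -/c Ec.
have null n : P nu (Z @^-1` `](r + n.+1%:R^-1)%:E, +oo[) = 0.
  set A := Z @^-1` _.
  have hA : natF X nu.-1 A by apply: hZm; exact: emeasurable_itv.
  have mA := natF_meas hA.
  have fA : P nu A \is a fin_num by apply: fin_num_measure.
  have e0 : (0 < n.+1%:R^-1 :> R)%R by rewrite invr_gt0 ltr0n.
  have h1 : (r + n.+1%:R^-1)%:E * P nu A <= \int[P nu]_(om in A) Z om.
    rewrite -integral_cst //; apply: ge0_le_integral => //.
    - by move=> om _ /=; rewrite lee_fin; apply: addr_ge0 => //; apply: ltW.
    - exact: measurable_funS mZ.
    - by move=> om; rewrite /A /= in_itv /= andbT => h; apply: ltW.
  have := le_trans h1 (key A hA).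
  rewrite -(fineK fA) -!EFinM lee_fin => h2.
  have p0' : (0 <= fine (P nu A))%R by apply: fine_ge0; apply: measure_ge0.
  have h3 : (n.+1%:R^-1 * fine (P nu A) <= 0)%R.
    move: h2; set e := (n.+1%:R^-1)%R; set p := fine (P nu A) => h2; nra.
  move: h3; rewrite pmulr_rle0 // => h4.
  have -> : P nu A = (fine (P nu A))%:E by rewrite fineK.
  by congr (_%:E); apply/eqP; rewrite eq_le h4 p0'.
have U : Z @^-1` `]r%:E, +oo[ = \bigcup_n (Z @^-1` `](r + n.+1%:R^-1)%:E, +oo[).
  apply/seteqP; split.
    move=> om /=; rewrite in_itv /= andbT.
    case Ez : (Z om) => [s| |] //= hz.
      have sr : (0 < s - r)%R by rewrite subr_gt0 -lte_fin.
      exists (Num.truncn (s - r)^-1) => //=; rewrite in_itv /= andbT Ez lte_fin -ltrBrDl.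
      rewrite invf_plt ?posrE ?ltr0n //.
      exact: truncnS_gt.
    by exists 0%N => //=; rewrite in_itv /= Ez ltry.
  move=> om [n _]; rewrite /= !in_itv /= !andbT; apply: lt_trans.
  by rewrite lte_fin ltrDl invr_gt0 ltr0n.
apply/ess_supP; apply/(ae_le_measureP _ _ mZ).
have mU n : measurable (Z @^-1` `](r + n.+1%:R^-1)%:E, +oo[).
  by rewrite -[X in measurable X]setTI; apply: mZ => //; apply: emeasurable_itv.
apply/negligibleP; first by rewrite U; apply: bigcupT_measurable.
rewrite U; apply: negligible_bigcup => n.
by apply/negligibleP => //; apply: null.
Qed.

End prob.

Local Close Scope ereal_scope.

Theorem lemma5 (R : realType) (d : nat) (dO : measure_display)
  (Omega : measurableType dO)
  (mu : {measure set (d.-tuple R) -> \bar R})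
  (p0 p1 : d.-tuple R -> R)
  (P : nat -> probability Omega R)
  (X : nat -> Omega -> d.-tuple R)
  (w : nat) (est : w.-tuple (d.-tuple R) -> d.-tuple R -> R)
  (hw : (0 < w)%N)
  (hp0 : is_density mu p0) (hp1 : is_density mu p1)
  (hest : forall s, is_density mu (est s))
  (hest_meas : measurable_fun [set: w.-tuple (d.-tuple R) * d.-tuple R]
                 (fun xy => est xy.1 xy.2))
  (hX : forall n, measurable_fun [set: Omega] (X n))
  (hmodel : forall nu, (1 <= nu)%N -> changepoint_model (P nu) mu X p0 p1 nu)
  (nu : nat) (b : R) :
  (1 <= nu)%N -> 0 < b ->
  forall Z : Omega -> \bar R,
    is_cond_exp (P nu) (natF X nu.-1)
      (fun om => maxe (tau_bar X est p0 b om - (nu%:R)%:E + 1)%E 0%E) Z ->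
    (ess_sup (P nu) Z <= \int[P 1%N]_om tau_bar X est p0 b om)%E.
Proof.
move=> hnu _ Z hZ.
exact: (main_gen hX hmodel ([tuple of nseq d 0%R]) hp0.1 hest_meas hnu hZ).
Qed.
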